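(* For $n\in\{4,5\}$ and every $\varepsilon>0$, there exists a symmetric matrix $A\in\mathbb{R}^{n\times n}$ with $\max_{i,j}|a_{ij}|=1$ and a factorization $A=LTL^T$, where $L=(l_{ij})$ is unit lower triangular with first column $e_1$ and $|l_{ij}|\le 1$, and $T$ is symmetric tridiagonal, such that $\max_{i,j}|t_{ij}|>2^{n-1}-\varepsilon$. Consequently the bound $2^{n-1}$ on the growth factor $\max_{i,j}|t_{ij}|/\max_{i,j}|a_{ij}|$ can be approached arbitrarily closely for $n=4,5$.
   Context: $e_1$ denotes the first column of the $n\times n$ identity matrix. Such factorizations $A=LTL^T$ (with $A$ already permuted) are those produced by Aasen's algorithm. *)

(* Defs.v *)
From HB Require Import structures.
From mathcomp Require Import all_boot all_order all_algebra.
Set Implicit Arguments. Unset Strict Implicit. Unset Printing Implicit Defensive.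
Import Order.TTheory GRing.Theory Num.Theory.
Local Open Scope ring_scope.

Definition maxabs (R : realFieldType) (n : nat) (M : 'M[R]_n) : R :=
  \big[Num.max/0]_(i < n) \big[Num.max/0]_(j < n) `|M i j|.

Definition unit_lower (R : realFieldType) (n : nat) (L : 'M[R]_n) : Prop :=
  (forall i j : 'I_n, (i < j)%N -> L i j = 0) /\ (forall i : 'I_n, L i i = 1).

Definition first_col_e1 (R : realFieldType) (n : nat) (L : 'M[R]_n) : Prop :=
  forall i j : 'I_n, nat_of_ord j = 0%N -> L i j = (i == j)%:R.

Definition tridiagonal (R : realFieldType) (n : nat) (T : 'M[R]_n) : Prop :=
  forall i j : 'I_n, (i.+1 < j)%N || (j.+1 < i)%N -> T i j = 0.

(* Main.v *)
Require Import Defs.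
From HB Require Import structures.
From mathcomp Require Import all_boot all_order all_algebra.
Import Order.TTheory GRing.Theory Num.Theory.
Local Open Scope ring_scope.

Definition mk (R : realFieldType) (n : nat) (f : nat -> nat -> int) : 'M[R]_n :=
  \matrix_(i, j) (f i j)%:~R.
Definition sumf (s : seq nat) (h : nat -> int) : int :=
  foldr (fun k acc => h k + acc) 0 s.
Definition pf (n : nat) (f g : nat -> nat -> int) : nat -> nat -> int :=
  fun i j => sumf (iota 0 n) (fun k => f i k * g k j).
Definition tf (f : nat -> nat -> int) : nat -> nat -> int := fun i j => f j i.
Definition allb (n : nat) (P : nat -> nat -> bool) : bool :=
  all (fun i => all (fun j => P i j) (iota 0 n)) (iota 0 n).
Definition ofl (rows : seq (seq int)) : nat -> nat -> int :=
  fun i j => nth 0 (nth [::] rows i) j.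

Lemma sumfE s h : sumf s h = \sum_(k <- s) h k.
Proof. by elim: s => [|a s IH]; rewrite ?big_nil ?big_cons //= IH. Qed.

Lemma allbP n P : allb n P -> forall i j : 'I_n, P i j.
Proof.
move=> /allP H i j.
have /H /allP H2 : (nat_of_ord i \in iota 0 n) by rewrite mem_iota /=.
by apply: H2; rewrite mem_iota /=.
Qed.

Arguments allbP {n P}.

Lemma mk_mul (R : realFieldType) n f g :
  (mk R n f) *m (mk R n g) = mk R n (pf n f g).
Proof.
apply/matrixP => i j; rewrite !mxE /pf sumfE.
have -> : iota 0 n = index_iota 0 n by rewrite /index_iota subn0.
rewrite big_mkord rmorph_sum /=; apply: eq_bigr => k _.
by rewrite !mxE intrM.
Qed.

Lemma mk_tr (R : realFieldType) n f : (mk R n f)^T = mk R n (tf f).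
Proof. by apply/matrixP => i j; rewrite !mxE. Qed.

Lemma mk_eq (R : realFieldType) n f g :
  allb n (fun i j => f i j == g i j) -> mk R n f = mk R n g.
Proof.
move=> H; apply/matrixP => i j; rewrite !mxE.
by rewrite (eqP (allbP H i j)).
Qed.

Lemma maxabs_le (R : realFieldType) n (M : 'M[R]_n) c :
  0 <= c -> (forall i j, `|M i j| <= c) -> maxabs M <= c.
Proof.
move=> c0 H; rewrite /maxabs.
elim/big_ind: _ => //; first by move=> x y hx hy; rewrite ge_max hx hy.
move=> i _; elim/big_ind: _ => //; first by move=> x y hx hy; rewrite ge_max hx hy.
Qed.

Lemma maxabs_ge (R : realFieldType) n (M : 'M[R]_n) i j :
  `|M i j| <= maxabs M.
Proof.
rewrite /maxabs (bigD1 i) //= le_max; apply/orP; left.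
by rewrite (bigD1 j) //= le_max lexx.
Qed.

Arguments maxabs_ge {R n} M i j.

Lemma construct (R : realFieldType) n (fA fL fT : nat -> nat -> int)
  (a b k l : 'I_n) (eps : R) (heps : 0 < eps) :
  allb n (fun i j => fA j i == fA i j) ->
  allb n (fun i j => `|fA i j| <= 1) -> `|fA a b| == 1 ->
  allb n (fun i j => fA i j == pf n (pf n fL fT) (tf fL) i j) ->
  allb n (fun i j => ((i < j)%N ==> (fL i j == 0)) && ((i == j) ==> (fL i j == 1))) ->
  allb n (fun i j => (j == 0)%N ==> (fL i j == (i == j)%:R)) ->
  allb n (fun i j => `|fL i j| <= 1) ->
  allb n (fun i j => fT j i == fT i j) ->
  allb n (fun i j => ((i.+1 < j)%N || (j.+1 < i)%N) ==> (fT i j == 0)) ->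
  `|fT k l| == 2 ^+ n.-1 ->
  exists (A L T : 'M[R]_n),
    A^T = A /\ maxabs A = 1 /\ A = L *m T *m L^T /\
    unit_lower L /\ first_col_e1 L /\ (forall i j, `|L i j| <= 1) /\
    T^T = T /\ tridiagonal T /\
    2%:R ^+ (n.-1) - eps < maxabs T.
Proof.
move=> hsA hbA hab hfac hul hfc hLb hsT htr hkl.
exists (mk R n fA), (mk R n fL), (mk R n fT).
split; first by rewrite mk_tr; apply: mk_eq; exact: hsA.
split.
  apply/eqP; rewrite eq_le; apply/andP; split.
    apply: maxabs_le => // i j; rewrite mxE -intr_norm lerz1.
    exact: (allbP hbA i j).
  by apply: le_trans (maxabs_ge _ a b); rewrite mxE -intr_norm (eqP hab).
split; first by rewrite !mk_mul mk_tr mk_mul; apply: mk_eq.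
split.
  split.
    move=> i j hij; rewrite mxE; have := allbP hul i j; rewrite hij /=.
    by case/andP=> /eqP -> _.
  move=> i; rewrite mxE; have := allbP hul i i; rewrite eqxx ltnn /=.
  by move/eqP ->.
split.
  move=> i j hj; rewrite mxE; have := allbP hfc i j; rewrite hj /= => /eqP ->.
  rewrite -(inj_eq val_inj) /= hj; case: (nat_of_ord i == 0%N); rewrite /= ?mulr1n ?mulr0n ?intr1 //.
split; first by move=> i j; rewrite mxE -intr_norm lerz1; exact: (allbP hLb i j).
split; first by rewrite mk_tr; apply: mk_eq; exact: hsT.
split.
  move=> i j hij; rewrite mxE; have := allbP htr i j; rewrite hij /=.
  by move/eqP ->.
apply: (lt_le_trans _ (maxabs_ge _ k l)).
rewrite mxE -intr_norm (eqP hkl) rmorphXn /=.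
by rewrite ltrBlDr ltrDl.
Qed.

Definition A4 := ofl [:: [:: 0; 0; 0; 0]; [:: 0; -1; -1; -1]; [:: 0; -1; 1; 1]; [:: 0; -1; 1; 1]].
Definition L4 := ofl [:: [:: 1; 0; 0; 0]; [:: 0; 1; 0; 0]; [:: 0; 1; 1; 0]; [:: 0; 1; -1; 1]].
Definition T4 := ofl [:: [:: 0; 0; 0; 0]; [:: 0; -1; 0; 0]; [:: 0; 0; 2; 4]; [:: 0; 0; 4; 8]].
Definition A5 := ofl [:: [:: 0; 0; 0; 0; 0]; [:: 0; 0; -1; 1; 1]; [:: 0; -1; 1; 1; 1];
                        [:: 0; 1; 1; 1; 1]; [:: 0; 1; 1; 1; 1]].
Definition L5 := ofl [:: [:: 1; 0; 0; 0; 0]; [:: 0; 1; 0; 0; 0]; [:: 0; -1; 1; 0; 0];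
                        [:: 0; -1; -1; 1; 0]; [:: 0; -1; -1; -1; 1]].
Definition T5 := ofl [:: [:: 0; 0; 0; 0; 0]; [:: 0; 0; -1; 0; 0]; [:: 0; -1; -1; 0; 0];
                        [:: 0; 0; 0; 4; 8]; [:: 0; 0; 0; 8; 16]].

Theorem mainTheorem3 (R : realFieldType) (n : nat) (hn : n = 4%N \/ n = 5%N)
  (eps : R) (heps : 0 < eps) :
  exists (A L T : 'M[R]_n),
    A^T = A /\ maxabs A = 1 /\ A = L *m T *m L^T /\
    unit_lower L /\ first_col_e1 L /\ (forall i j, `|L i j| <= 1) /\
    T^T = T /\ tridiagonal T /\
    2%:R ^+ (n.-1) - eps < maxabs T.
Proof.
case: hn => ->.
  apply: (@construct R 4 A4 L4 T4 (@Ordinal 4 1 isT) (@Ordinal 4 1 isT) (@Ordinal 4 3 isT) (@Ordinal 4 3 isT) eps heps);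
    by vm_compute.
apply: (@construct R 5 A5 L5 T5 (@Ordinal 5 1 isT) (@Ordinal 5 2 isT) (@Ordinal 5 4 isT) (@Ordinal 5 4 isT) eps heps);
  by vm_compute.
Qed.
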